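(* Let $A, B \in\mathbb{C}^{n\times n}$ be matrices of index at most $1$. Then $A\leq\# B$ if and only if $A\leq^{GD1}B$, where $A\leq\# B$ means $A^2=BA$ and $R(A^* )\subseteq R(B^* )$.
   Context: For $A\in\mathbb{C}^{n\times n}$, $ind(A)$ is the smallest nonnegative integer $k$ with $\mathrm{rank}(A^k)=\mathrm{rank}(A^{k+1})$. $A\{1\}$ is the set of matrices $X$ with $AXA=A$. With $k=ind(A)$, $A\{GD\}$ is the set of matrices $X$ with $AXA=A$, $XA^{k+1}=A^k$, $A^{k+1}X=A^k$ (G-Drazin inverses). A GD1 inverse of $A$ is a matrix $A^{GD1}=A^{GD}AA^-$ with $A^-\in A\{1\}$, $A^{GD}\in A\{GD\}$. We write $A\leq^{GD1}B$ if $AA^{GD1}=BA^{GD1}$ and $A^{GD1}A=A^{GD1}B$ for some GD1 inverse $A^{GD1}$ of $A$. $A^*$ is the conjugate transpose and $R(\cdot)$ the range. *)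

(* Defs.v *)
From HB Require Import structures.
From mathcomp Require Import all_boot all_order all_algebra.
From mathcomp Require Import reals.
From mathcomp.real_closed Require Import complex.
Set Implicit Arguments. Unset Strict Implicit. Unset Printing Implicit Defensive.
Import Order.TTheory GRing.Theory Num.Theory.
Local Open Scope ring_scope.

Section Defs.
Variables (C : numClosedFieldType) (n : nat).
Implicit Types A B X Y : 'M[C]_n.

(* ind(A): smallest k with rank(A^k) = rank(A^(k+1)); such k <= n always exists. *)
Definition mxindex A : nat :=
  find (fun k => \rank (A ^+ k) == \rank (A ^+ k.+1)) (iota 0 n.+1).

Definition ctmx A : 'M[C]_n := (map_mx Num.conj A)^T.

(* R(X) <= R(Y) for column spaces (mathcomp's <=%MS is about row spaces) *)
Definition colsub A B : Prop := (A^T <= B^T)%MS.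

Definition g1inv A X : Prop := A *m X *m A = A.

Definition gdinv A X : Prop :=
  A *m X *m A = A /\ X *m A ^+ (mxindex A).+1 = A ^+ mxindex A
  /\ A ^+ (mxindex A).+1 *m X = A ^+ mxindex A.

Definition gd1inv A X : Prop :=
  exists G Am, gdinv A G /\ g1inv A Am /\ X = G *m A *m Am.

Definition le_GD1 A B : Prop :=
  exists X, gd1inv A X /\ A *m X = B *m X /\ X *m A = X *m B.

Definition le_sharp A B : Prop :=
  A ^+ 2 = B *m A /\ colsub (ctmx A) (ctmx B).
End Defs.

(* Main.v *)
Require Import Defs.
From HB Require Import structures.
From mathcomp Require Import all_boot all_order all_algebra.
From mathcomp Require Import reals.
From mathcomp.real_closed Require Import complex.
Import Order.TTheory GRing.Theory Num.Theory.
Local Open Scope ring_scope.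
Local Open Scope complex_scope.

Section Helpers.
Variables (C : numClosedFieldType) (n : nat).
Implicit Types A B X Y : 'M[C]_n.

Lemma idx_prop A : (mxindex A <= 1)%N ->
  \rank (A ^+ mxindex A) = \rank (A ^+ (mxindex A).+1).
Proof.
move=> hk; case: n A hk => [|n'] A hk.
  by apply/eqP; rewrite eqn_leq !(leq_trans (rank_leq_row _)).
apply/eqP.
have hs : has (fun k => \rank (A ^+ k) == \rank (A ^+ k.+1)) (iota 0 n'.+2).
  rewrite has_find size_iota; apply: leq_ltn_trans hk _; done.
have := nth_find 0%N hs; rewrite -/(mxindex A) nth_iota //.
by rewrite (leq_ltn_trans hk).
Qed.

Lemma idx_rank2 A : (mxindex A <= 1)%N -> \rank (A *m A) = \rank A.
Proof.
move=> hk; have := @idx_prop A hk.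
case: (mxindex A) hk => [|[|//]] _ /=.
  rewrite expr0 expr1 -idmxE mxrank1 => h.
  have hu : A \in unitmx by rewrite -row_free_unit /row_free -h.
  by rewrite (mxrank_unit hu) mxrank_unit // unitmx_mul hu.
by rewrite expr1 expr2 mulmxE.
Qed.

Lemma idx0_unit A : mxindex A = 0%N -> A \in unitmx.
Proof.
move=> h0; have := @idx_prop A; rewrite h0 => /(_ isT).
by rewrite expr0 expr1 -idmxE mxrank1 => h; rewrite -row_free_unit /row_free -h.
Qed.

Lemma left_fac A : \rank (A *m A) = \rank A -> exists W, A = W *m (A *m A).
Proof.
move=> h.
have s : (A *m A <= A)%MS by apply: submxMl.
case: (mxrank_leqif_sup s) => _ hC.
have hs : (A <= A *m A)%MS by rewrite -hC h.
by case/submxP: hs => W hW; exists W.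
Qed.

Lemma right_fac A : \rank (A *m A) = \rank A -> exists Z, A = (A *m A) *m Z.
Proof.
move=> h; have h' : \rank (A^T *m A^T) = \rank A^T by rewrite -trmx_mul !mxrank_tr.
case: (@left_fac _ h') => V hV; exists V^T.
by rewrite -[A]trmxK {1}hV !trmx_mul !trmxK.
Qed.

End Helpers.

Theorem theorem2p14 (R : realType) (n : nat) (A B : 'M[R[i]]_n) :
  (mxindex A <= 1)%N -> (mxindex B <= 1)%N ->
  (le_sharp A B <-> le_GD1 A B).
Proof.
move=> hA _.
have colE : forall M N : 'M[R[i]]_n, Defs.colsub (ctmx M) (ctmx N) <-> (M <= N)%MS.
  move=> M N; rewrite /Defs.colsub /ctmx !trmxK.
  by rewrite (map_submx (Num.conj_op : {rmorphism _ -> _})).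
split.
- case=> hsq /colE /submxP [Y hY].
  have r2 := idx_rank2 _ _ _ hA.
  case: (left_fac _ _ _ r2) => W hW; case: (right_fac _ _ _ r2) => Z hZ.
  set P := A *m Z.
  have hP : W *m A = P by rewrite /P [in RHS]hW -mulmxA -hZ.
  have PA : P *m A = A by rewrite -hP -mulmxA -hW.
  have AP : A *m P = A by rewrite /P mulmxA -hZ.
  have PP : P *m P = P by change (P *m (A *m Z) = P); rewrite mulmxA PA.
  set G := W *m A *m Z.
  have AG : A *m G = P by rewrite /G hP mulmxA AP.
  have GA : G *m A = P.
    have -> : G *m A = W *m (A *m Z *m A) by rewrite /G !mulmxA.
    by rewrite -/P PA hP.
  have A2 : A *m A = B *m A by rewrite -hsq expr2 mulmxE.
  have YA : Y *m A = A.
    by rewrite {1}hZ A2 !mulmxA -hY -hZ.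
  set Q := P *m Y.
  have QA : Q *m A = A by rewrite /Q -mulmxA YA PA.
  have QB : Q *m B = A by rewrite /Q -mulmxA -hY PA.
  have PQ : P *m Q = Q by rewrite /Q mulmxA PP.
  have BP : B *m P = A by rewrite /P mulmxA -A2 -hZ.
  set Am := G *m Q.
  have AAm : A *m Am = Q by rewrite /Am mulmxA AG PQ.
  exists (G *m A *m Am); split; last split.
  - exists G, Am; split; last split => //.
    + rewrite /gdinv.
      have AGA : A *m G *m A = A by rewrite AG PA.
      case hk : (mxindex A) hA => [|[|//]] _.
      * have hu := idx0_unit _ _ _ hk.
        have P1 : P = 1%:M.
          by rewrite -[P](mulKmx hu) AP mulVmx.
        by rewrite AGA expr0 expr1 -idmxE GA AG P1; do !split.
      * by rewrite AGA expr1 expr2 -mulmxE mulmxA GA PA -mulmxA AG AP; do !split.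
    + by rewrite /g1inv AAm QA.
  - by rewrite GA (mulmxA A P) (mulmxA B P) AP BP.
  - by rewrite -(mulmxA G A Am) AAm -(mulmxA G Q A) -(mulmxA G Q B) QA QB.
- case=> X [[G [Am [hG [hAm ->]]]] [hAX hXA]].
  case: hG => AGA hG.
  have GAA : G *m (A *m A) = A.
    case hk : (mxindex A) hA hG => [|[|//]] _.
    + by rewrite expr0 expr1 => -[h _]; rewrite mulmxA h mul1mx.
    + by rewrite expr1 expr2 -mulmxE => -[h _].
  move: hAm; rewrite /g1inv => hAm.
  have h1 := congr1 (mulmx^~ A) hAX; rewrite /= !mulmxA AGA hAm in h1.
  rewrite -(mulmxA (B *m G) A Am) -(mulmxA (B *m G) (A *m Am) A) hAm in h1.
  have h2 := congr1 (mulmx A) hXA; rewrite /= !mulmxA AGA hAm in h2.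
  split.
  + by rewrite expr2 -mulmxE {1}h1 -(mulmxA (B *m G) A A) -(mulmxA B G) GAA.
  + by apply/colE; apply/submxP; exists (A *m Am).
Qed.
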